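(* Let $c\in\mathbb{R}^n$, $A\in\mathbb{R}^{m\times n}$, $b\in\mathbb{R}^m$ and $\emptyset\neq I\subseteq\{1,\dots,n\}$, and let $X:=\{x\in\mathbb{R}^n : Ax\ge b,\ x_I\in[0,1]^I\}$ be nonempty and $Y:=\{0,1\}^I$. Consider the problem $$\min_{x,y}\ \|x_I-y\|_1 \quad\text{s.t.}\quad x\in X,\ y\in Y. \qquad (\ast)$$ Apply the alternating direction method to $(\ast)$: starting from $(x^0,y^0)\in X\times Y$, for $k=0,1,\dots$ compute $x^{k+1}\in\arg\min_{x\in X}\|x_I-y^k\|_1$ (a global minimizer) and $y^{k+1}\in\arg\min_{y\in Y}\|x^{k+1}_I-y\|_1$, where ties in the $y$-step are resolved by choosing the lexicographically minimal minimizer, so that the $y$-step has a unique output; the method stops as soon as the current iterate $(x^k,y^k)$ is a partial minimum of $(\ast)$. Then the sequence of iterates $z^k=(x^k,y^k)$ does not cycle, i.e., there is no iteration $k$ and no $l\ge 2$ with $z^k=z^{k+l}$.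
   Context: A point $(x^*,y^* )\in X\times Y$ is a partial minimum of $(\ast)$ if $\|x^*_I-y^*\|_1\le\|x_I-y^*\|_1$ for all $x\in X$ and $\|x^*_I-y^*\|_1\le \|x^*_I-y\|_1$ for all $y\in Y$. $x_I$ denotes the subvector of $x$ with components indexed by $I$. *)

(* Defs.v *)
From HB Require Import structures.
From mathcomp Require Import all_boot all_order all_algebra.
From mathcomp Require Import reals.
Set Implicit Arguments. Unset Strict Implicit. Unset Printing Implicit Defensive.
Import Order.TTheory GRing.Theory Num.Theory.
Local Open Scope ring_scope.

Section FP.
Variables (R : realType) (n m : nat).
Variables (A : 'M[R]_(m, n)) (b : 'cV[R]_m) (I : {set 'I_n}).

Definition inX (x : 'cV[R]_n) : Prop :=
  (forall i : 'I_m, b i 0 <= (A *m x) i 0) /\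
  (forall j : 'I_n, j \in I -> 0 <= x j 0 <= 1).

(* Y = {0,1}^I, encoded as vectors of R^n with entries in {0,1} on I
   and 0 outside I (a bijective encoding). *)
Definition inY (y : 'cV[R]_n) : Prop :=
  forall j : 'I_n, (j \in I -> y j 0 = 0 \/ y j 0 = 1) /\ (j \notin I -> y j 0 = 0).

Definition dist1 (x y : 'cV[R]_n) : R := \sum_(j in I) `|x j 0 - y j 0|.

Definition partial_min (x y : 'cV[R]_n) : Prop :=
  inX x /\ inY y /\
  (forall x' , inX x' -> dist1 x y <= dist1 x' y) /\
  (forall y' , inY y' -> dist1 x y <= dist1 x y').

Definition lex_lt (y y' : 'cV[R]_n) : Prop :=
  exists j : 'I_n, [/\ j \in I, y j 0 < y' j 0 &
    forall i : 'I_n, i \in I -> (i < j)%N -> y i 0 = y' i 0].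

Definition x_step (yk x : 'cV[R]_n) : Prop :=
  inX x /\ forall x', inX x' -> dist1 x yk <= dist1 x' yk.

Definition y_argmin (xk y : 'cV[R]_n) : Prop :=
  inY y /\ forall y', inY y' -> dist1 xk y <= dist1 xk y'.

Definition y_step (xk y : 'cV[R]_n) : Prop :=
  y_argmin xk y /\ forall y', y_argmin xk y' -> y' = y \/ lex_lt y y'.

End FP.

(* Main.v *)
Require Import Defs.
From HB Require Import structures.
From mathcomp Require Import all_boot all_order all_algebra.
From mathcomp Require Import reals.
Import Order.TTheory GRing.Theory Num.Theory.
Local Open Scope ring_scope.

Lemma lex_trans (R : realType) (n : nat) (I : {set 'I_n}) (u v w : 'cV[R]_n) :
  lex_lt I u v -> lex_lt I v w -> lex_lt I u w.
Proof.
move=> [j [jI ltj eqj]] [j' [jI' ltj' eqj']].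
case: (ltngtP j j') => [hjj|hjj|hjj].
- exists j; split=> //; first by rewrite -(eqj' j jI hjj).
  by move=> i iI ij; rewrite eqj // eqj' // (ltn_trans ij hjj).
- exists j'; split=> //; first by rewrite (eqj j' jI' hjj).
  by move=> i iI ij; rewrite eqj // ?eqj' // (ltn_trans ij hjj).
- have e : j = j' by apply: val_inj.
  subst j'; exists j; split=> //; first exact: lt_trans ltj ltj'.
  by move=> i iI ij; rewrite eqj // eqj'.
Qed.

Lemma lex_irr (R : realType) (n : nat) (I : {set 'I_n}) (u : 'cV[R]_n) :
  ~ lex_lt I u u.
Proof. by move=> [j [_ h _]]; rewrite ltxx in h. Qed.

Arguments lex_trans {R n I u v w}.
Arguments lex_irr {R n I u}.

Definition lexle (R : realType) (n : nat) (I : {set 'I_n}) (u v : 'cV[R]_n) :=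
  u = v \/ lex_lt I u v.
Arguments lexle {R n}.

Lemma lexle_trans (R : realType) (n : nat) (I : {set 'I_n}) (u v w : 'cV[R]_n) :
  lexle I u v -> lexle I v w -> lexle I u w.
Proof.
move=> [->|h1] // [<-|h2]; first by right.
by right; exact: lex_trans h1 h2.
Qed.

Theorem mainTheorem1 (R : realType) (n m : nat) (c : 'cV[R]_n)
  (A : 'M[R]_(m, n)) (b : 'cV[R]_m) (I : {set 'I_n}) :
  I != set0 ->
  (exists x, inX A b I x) ->
  forall (K : nat) (x y : nat -> 'cV[R]_n),
    inX A b I (x 0%N) -> inY I (y 0%N) ->
    (forall k : nat, (k < K)%N ->
       [/\ ~ partial_min A b I (x k) (y k),
           x_step A b I (y k) (x k.+1) &
           y_step I (x k.+1) (y k.+1)]) ->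
    forall k l : nat, (2 <= l)%N -> (k + l <= K)%N ->
      (x k, y k) <> (x (k + l)%N, y (k + l)%N).
Proof.
move=> _ _ K x y x0X y0Y H k l l2 kl E.
case: E => Exk Eyk.
have XS j : (j <= K)%N -> inX A b I (x j).
  case: j => [|j] // jK; by case: (H j jK) => _ [].
have YS j : (j <= K)%N -> inY I (y j).
  case: j => [|j] // jK; by case: (H j jK) => _ _ [[]].
pose F j := dist1 I (x j) (y j).
have step j : (j < K)%N ->
  F j.+1 <= dist1 I (x j.+1) (y j) /\ dist1 I (x j.+1) (y j) <= F j.
  move=> jK; case: (H j jK) => _ [_ hx] [[_ hy] _]; split.
  - exact: hy (YS j (ltnW jK)).
  - exact: hx (XS j (ltnW jK)).
have mono i d : (i + d <= K)%N -> F (i + d)%N <= F i.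
  elim: d => [|d IH] hd; first by rewrite addn0.
  rewrite addnS in hd *.
  have [h1 h2] := step (i + d)%N hd.
  apply: le_trans (IH (ltnW hd)); exact: le_trans h1 h2.
have eqG j : (k <= j)%N -> (j < k + l)%N -> dist1 I (x j.+1) (y j) = F j.+1.
  move=> kj jkl.
  have jK : (j < K)%N by apply: leq_trans kl.
  have [h1 h2] := step j jK.
  apply/eqP; rewrite eq_le h1 andbT.
  apply: (le_trans h2).
  have e1 : j = (k + (j - k))%N by rewrite subnKC.
  have := mono k (j - k)%N; rewrite -e1 => /(_ (ltnW jK)) h3.
  apply: (le_trans h3).
  have e2 : (k + l)%N = (j.+1 + (k + l - j.+1))%N by rewrite subnKC.
  have := mono j.+1 (k + l - j.+1)%N; rewrite -e2 => /(_ kl) h4.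
  by rewrite /F -Exk -Eyk in h4.
have lx j : (k <= j)%N -> (j < k + l)%N -> lexle I (y j.+1) (y j).
  move=> kj jkl.
  have jK : (j < K)%N by apply: leq_trans kl.
  case: (H j jK) => _ _ [[Yy hy] hmin].
  have hm : y_argmin I (x j.+1) (y j).
    split; first exact: YS (ltnW jK).
    by move=> y' Yy'; rewrite eqG //; exact: hy.
  by case: (hmin _ hm) => [->|h]; [left|right].
have chain d : (k.+1 + d <= k + l)%N -> lexle I (y (k.+1 + d)%N) (y k.+1).
  elim: d => [|d IH] hd; first by rewrite addn0; left.
  rewrite addnS in hd *.
  apply: lexle_trans (IH (ltnW hd)).
  apply: lx => //; exact: leq_trans (leqnSn k) (leq_addr _ _).
have hl : (k.+1 + (l - 1))%N = (k + l)%N.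
  by rewrite addSnnS subn1 prednK // (leq_trans _ l2).
have c1 := chain (l - 1)%N; rewrite hl -Eyk in c1.
have c2 := lx k (leqnn k).
have e : y k.+1 = y k.
  case: (c1 (leqnn _)) => [->|h1] //.
  case: (c2 _) => [|->|h2] //; first by rewrite -[X in (X < _)%N]addn0 ltn_add2l (leq_trans _ l2).
  by case: (lex_irr (lex_trans h1 h2)).
have k1K : (k.+1 < K)%N.
  by apply: leq_trans kl; rewrite -addn2 leq_add2l.
case: (H k.+1 k1K) => hn _ _; apply: hn.
have kK : (k < K)%N by apply: ltn_trans k1K.
case: (H k kK) => _ [Xx hx] [[Yy hy] _].
split=> //; split=> //; split; last exact: hy.
by rewrite e; exact: hx.
Qed.
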